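(* Let $\mathcal L$ be a finite relational language, let $E\notin\mathcal L$ be the binary predicate symbol of $T_{\mathrm{Graph}}$, let $J\colon T_{\mathcal L}\leadsto T_{\mathrm{Graph}}\cup T_{\mathcal L}$ be the structure-erasing interpretation (so $J(M)$ is the $\mathcal L$-reduct of $M$), let $\mathcal F$ be a family of models of $T_{\mathrm{Graph}}\cup T_{\mathcal L}$, and let $I\colon T_{\mathrm{Graph}}\leadsto\mathrm{Forb}_{T_{\mathrm{Graph}}\cup T_{\mathcal L}}(\mathcal F\!\uparrow^E)$ act identically on $E$. Then $$\chi(I)=\inf\{\ell\in\mathbb{N}_+:\mathcal P_{\ell,\mathcal L}\subseteq\chi^E_\ell(\mathcal F)\}$$ (with $\inf\varnothing=\infty$). Furthermore, $\chi(I)<\infty$ if and only if $\mathcal P_{1,\mathcal L}\subseteq\mathcal U_1(J(\mathcal F))$, where $J(\mathcal F)=\{J(F):F\in\mathcal F\}$.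
   Context: Structures are finite and canonical (no predicate holds on a tuple with a repeated entry); $V(M)$ is the vertex set, $(V)_k$ the set of injective maps $[k]\to V$, $R_P(M)\subseteq(V(M))_{k(P)}$ the tuples satisfying $P$. $T_{\mathcal L}$: all canonical $\mathcal L$-structures; $T_{\mathrm{Graph}}$: simple graphs over $\{E\}$; models of $T_{\mathrm{Graph}}\cup T_{\mathcal L}$ are graphs with an arbitrary canonical $\mathcal L$-structure on the same vertex set. $\mathcal F\!\uparrow^E$: all models $F'$ of $T_{\mathrm{Graph}}\cup T_{\mathcal L}$ such that for some $F\in\mathcal F$, $V(F')=V(F)$, $R_E(F')\supseteq R_E(F)$, $R_P(F')=R_P(F)$ for $P\in\mathcal L$. $\mathrm{Forb}_T(\mathcal G)$: models of $T$ with no induced substructure isomorphic to a member of $\mathcal G$. $I$ acts identically on $E$, so $I(M)$ is the graph part of $M$. $\chi(I)=\sup(\{\ell\in\mathbb{N}_+:\forall n\ \exists N\in\mathcal M_n[T],\ T_{n,\ell}\subseteq I(N)\}\cup\{0\})+1$, with $\mathcal M_n[T]$ the $n$-vertex models up to isomorphism, $T_{n,\ell}$ the balanced complete $\ell$-partite graph on $n$ vertices, and $G\subseteq H$ meaning an injection mapping edges to edges. An $\ell$-split order over $V$ is $(f,\preceq)$ with $f\colon V\to[\ell]$ and $\preceq$ a reflexive partial order such that $v,w$ are comparable iff $f(v)=f(w)$; $\mathcal S_{\ell,V}$ is the set of these, $\mathcal S_{\ell,k}=\mathcal S_{\ell,[k]}$. For an injection $g$, $w_1\preceq_g w_2\iff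 g(w_1)\preceq g(w_2)$. An $\ell$-Ramsey pattern on $\mathcal L$ is $Q\colon P\mapsto Q_P\subseteq\mathcal S_{\ell,k(P)}$ ($P\in\mathcal L$); $\mathcal P_{\ell,\mathcal L}$ is the set of these. An $\mathcal L$-structure $K$ is $Q$-uniform w.r.t. $(f,\preceq)\in\mathcal S_{\ell,V(K)}$ if $R_P(K)=\{\alpha\in(V(K))_{k(P)}:(f\circ\alpha,\preceq_\alpha)\in Q_P\}$ for all $P\in\mathcal L$; $\mathcal U_\ell(K)$ is the set of $Q$ for which $K$ is $Q$-uniform w.r.t. some $\ell$-split order on $V(K)$, and $\mathcal U_\ell$ of a family is the union. For a model $M$ of $T_{\mathrm{Graph}}\cup T_{\mathcal L}$ and $Q\in\mathcal P_{\ell,\mathcal L}$, an $E$-proper $Q$-split ordering of $M$ is $(f,\preceq)\in\mathcal S_{\ell,V(M)}$ such that $J(M)$ is $Q$-uniform w.r.t. $(f,\preceq)$ and $f$ is a proper coloring of the graph part of $M$. $\chi^E_\ell(M)$ is the set of $Q\in\mathcal P_{\ell,\mathcal L}$ such that $M$ has an $E$-proper $Q$-split ordering, and $\chi^E_\ell(\mathcal F)=\bigcup_{M\in\mathcal F}\chi^E_\ell(M)$. *)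

(* Defs.v *)
From mathcomp Require Import all_boot.
Unset Printing Implicit Defensive.

(** A finite relational language: a finite type [L] of predicate symbols
    with arities [k : L -> nat]. *)

Record Lstruct (L : finType) (k : L -> nat) := LS {
  lnv : nat;
  lrels : forall P : L, {set {ffun 'I_(k P) -> 'I_lnv}} }.
Arguments Lstruct {L} k.
Arguments lnv {L k} _.
Arguments lrels {L k} _ P.
Arguments LS {L k} lnv lrels.

(** Structures over L + {E} (E is the graph edge predicate, not in L). *)
Record GLstruct (L : finType) (k : L -> nat) := GLS {
  nv : nat;
  edge : rel 'I_nv;
  rels : forall P : L, {set {ffun 'I_(k P) -> 'I_nv}} }.
Arguments GLstruct {L} k.
Arguments nv {L k} _.
Arguments edge {L k} _ _ _.
Arguments rels {L k} _ P.
Arguments GLS {L k} nv edge rels.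

Definition tcomp {m n j : nat} (f : 'I_m -> 'I_n) (a : {ffun 'I_j -> 'I_m})
  : {ffun 'I_j -> 'I_n} := [ffun i => f (a i)].

Definition is_canonical {L : finType} {k : L -> nat} (M : GLstruct k) : Prop :=
  forall (P : L) (a : {ffun 'I_(k P) -> 'I_(nv M)}), a \in rels M P -> injective a.

Definition is_model {L : finType} {k : L -> nat} (M : GLstruct k) : Prop :=
  [/\ symmetric (edge M), irreflexive (edge M) & is_canonical M].

Definition J {L : finType} {k : L -> nat} (M : GLstruct k) : Lstruct k := LS (nv M) (rels M).

Definition induced_copy {L : finType} {k : L -> nat} (G M : GLstruct k) : Prop :=
  exists f : 'I_(nv G) -> 'I_(nv M),
    [/\ injective f,
        forall x y, edge G x y = edge M (f x) (f y)
      & forall (P : L) (a : {ffun 'I_(k P) -> 'I_(nv G)}),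
          (a \in rels G P) = (tcomp f a \in rels M P)].

(** F' ∈ F↑E : F' is a model with V(F') = V(F) (transport along nv F = nv F'),
    more edges, same L-relations, for some F in the family. *)
Definition upE {L : finType} {k : L -> nat} (fam : GLstruct k -> Prop) (F' : GLstruct k) : Prop :=
  is_model F' /\
  exists F, fam F /\ exists e : nv F = nv F',
    (forall x y, edge F x y -> edge F' (cast_ord e x) (cast_ord e y)) /\
    (forall (P : L) (a : {ffun 'I_(k P) -> 'I_(nv F)}),
        (a \in rels F P) = (tcomp (cast_ord e) a \in rels F' P)).

Definition Forb {L : finType} {k : L -> nat} (fam : GLstruct k -> Prop) (M : GLstruct k) : Prop :=
  is_model M /\ ~ (exists G, upE fam G /\ induced_copy G M).

(** balanced complete l-partite graph on n vertices (parts = residues mod l) *)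
Definition Tnl (n l : nat) : rel 'I_n := fun x y => (x %% l) != (y %% l).

Definition subgraph_of {L : finType} {k : L -> nat} {n : nat} (G : rel 'I_n) (M : GLstruct k) : Prop :=
  exists f : 'I_n -> 'I_(nv M), injective f /\ forall x y, G x y -> edge M (f x) (f y).


(** the set whose sup (with 0) plus one is χ(I), I the interpretation acting
    identically on E, T = Forb(F↑E). *)
Definition chiA {L : finType} {k : L -> nat} (fam : GLstruct k -> Prop) (l : nat) : Prop :=
  0 < l /\ forall n, exists N, [/\ Forb fam N, nv N = n & subgraph_of (Tnl n l) N].

(** chi_val fam x : χ(I) = x, where None stands for ∞. *)
Definition chi_val {L : finType} {k : L -> nat} (fam : GLstruct k -> Prop) (x : option nat) : Prop :=
  match x with
  | Some m => exists s, [/\ m = s.+1, (forall l, chiA fam l -> l <= s) & (s = 0 \/ chiA fam s)]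
  | None => forall s, exists l, chiA fam l /\ s < l
  end.

(** inf_val B x : inf B = x (None = ∞ = inf of the empty set). *)
Definition inf_val (B : nat -> Prop) (x : option nat) : Prop :=
  match x with
  | Some m => B m /\ forall l, B l -> m <= l
  | None => forall l, ~ B l
  end.

(** Candidate l-split orders over V : pairs (f, ≼) with ≼ as a boolean relation. *)
Definition sord (V : finType) (l : nat) := ({ffun V -> 'I_l} * {ffun V * V -> bool})%type.

Definition is_split {V : finType} {l : nat} (so : sord V l) : Prop :=
  let f := so.1 in let r := so.2 in
  [/\ forall v, r (v, v),
      forall v w, r (v, w) -> r (w, v) -> v = w,
      forall u v w, r (u, v) -> r (v, w) -> r (u, w)
    & forall v w, (r (v, w) || r (w, v)) = (f v == f w)].

Definition pullback {V : finType} {l j : nat} (so : sord V l) (a : {ffun 'I_j -> V})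
  : sord 'I_j l :=
  ([ffun i => so.1 (a i)], [ffun p => so.2 (a p.1, a p.2)]).

Definition pattern {L : finType} (k : L -> nat) (l : nat) :=
  forall P : L, {set sord 'I_(k P) l}.

Definition is_pattern {L : finType} {k : L -> nat} {l : nat} (Q : pattern k l) : Prop :=
  forall (P : L) q, q \in Q P -> is_split q.

Definition uniform {L : finType} {k : L -> nat} {l : nat} (K : Lstruct k) (Q : pattern k l)
  (so : sord 'I_(lnv K) l) : Prop :=
  forall (P : L) (a : {ffun 'I_(k P) -> 'I_(lnv K)}),
    a \in lrels K P <-> (injective a /\ pullback so a \in Q P).

Definition E_proper {L : finType} {k : L -> nat} {l : nat} (M : GLstruct k) (Q : pattern k l)
  (so : sord 'I_(nv M) l) : Prop :=
  [/\ is_split so, uniform (J M) Q so & forall x y, edge M x y -> so.1 x != so.1 y].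

Definition chiE {L : finType} {k : L -> nat} (fam : GLstruct k -> Prop) (l : nat) (Q : pattern k l) : Prop :=
  exists M, fam M /\ exists so : sord 'I_(nv M) l, E_proper M Q so.

Definition chiB {L : finType} {k : L -> nat} (fam : GLstruct k -> Prop) (l : nat) : Prop :=
  0 < l /\ forall Q : pattern k l, is_pattern Q -> chiE fam l Q.

Definition U {L : finType} {k : L -> nat} (l : nat) (famL : Lstruct k -> Prop) (Q : pattern k l) : Prop :=
  exists K, famL K /\ exists so : sord 'I_(lnv K) l, is_split so /\ uniform K Q so.

Definition Jfam {L : finType} {k : L -> nat} (fam : GLstruct k -> Prop) : Lstruct k -> Prop :=
  fun K => exists F, fam F /\ K = J F.

(* Main.v *)
Require Import Defs.
From mathcomp Require Import all_boot.
From mathcomp Require Import zify.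
From Stdlib Require Import Classical.
Set Implicit Arguments. Unset Strict Implicit. Unset Printing Implicit Defensive.


Lemma fin_bound (C : finType) (P : C -> nat -> Prop) :
  (forall c N N', N <= N' -> P c N -> P c N') ->
  (forall c, exists N, P c N) -> exists N, forall c, P c N.
Proof.
move=> mono ex.
suff: forall s : seq C, exists N, forall c, c \in s -> P c N.
  by move=> /(_ (enum C)) [N HN]; exists N => c; apply: HN; rewrite mem_enum.
elim=> [|c s [N HN]]; first by exists 0.
have [Nc HNc] := ex c.
exists (maxn N Nc) => c'; rewrite inE => /orP [/eqP ->|Hc'].
  by apply: mono HNc; exact: leq_maxr.
by apply: mono (HN _ Hc'); exact: leq_maxl.
Qed.

Lemma sub_tr (s1 s2 s3 : seq nat) : subseq s1 s2 -> subseq s2 s3 -> subseq s1 s3.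
Proof. move=> a b; exact: (@subseq_trans _ s2 s1 s3 a b). Qed.

Definition homog (C : Type) (col : seq nat -> C) K H c0 :=
  forall T, subseq T H -> size T = K -> col T = c0.

Definition RamseyP (C : finType) K (t : C -> nat) N :=
  forall (A : seq nat) (col : seq nat -> C), N <= size A ->
    exists c0 H, [/\ subseq H A, size H = t c0 & homog col K H c0].

Lemma ramsey0 (C : finType) m : exists N, RamseyP 0 (fun _ : C => m) N.
Proof.
exists m => A col HA; exists (col [::]), (take m A); split.
- exact: take_subseq.
- by rewrite size_takel.
- by move=> T _ /size0nil ->.
Qed.

Lemma ramsey_step (C : finType) K :
  (forall m, exists N, RamseyP K (fun _ : C => m) N) ->
  forall s (t : C -> nat), \sum_c t c <= s -> exists N, RamseyP K.+1 t N.
Proof.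
move=> IHK; elim=> [|s IHs] t Ht.
  case: (pickP (fun c => t c == 0)) => [c0 /eqP t0|tpos].
    exists 0 => A col _; exists c0, [::]; split => //; first exact: sub0seq.
    by move=> T /eqP -> .
  exists 0 => A col _; have := tpos (col [::]); move: Ht.
  by rewrite (bigD1 (col [::])) //= => Ht /negbT; lia.
case: (pickP (fun c => t c == 0)) => [c0 /eqP t0|tpos].
  exists 0 => A col _; exists c0, [::]; split => //; first exact: sub0seq.
  by move=> T /eqP -> .
pose t' d c := if c == d then (t c).-1 else t c.
have Ht' : forall d, \sum_c t' d c <= s.
  move=> d; move: Ht; rewrite (bigD1 d) //= [X in _ -> X <= _](bigD1 d) //= /t' eqxx.
  have -> : \sum_(i | i != d) (if i == d then (t i).-1 else t i) = \sum_(i | i != d) t i.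
    by apply: eq_bigr => i /negbTE ->.
  have := tpos d => /negbT; lia.
have [N' HN'] : exists N', forall d, RamseyP K.+1 (t' d) N'.
  apply: fin_bound; last by move=> d; apply: IHs.
  by move=> c N1 N2 le HP A col HA; apply: HP; apply: leq_trans HA.
have [R HR] := IHK N'.
exists R.+1; case=> [//|x A'] col /= HA.
have [d [H1 [s1 sz1 hom1]]] := HR A' (fun T => col (x :: T)) HA.
have [d' [H2 [s2 sz2 hom2]]] := HN' d H1 col (eq_leq (esym sz1)).
case: (eqVneq d' d) => [eqd|ne].
  subst d'; exists d, (x :: H2); split.
  - by rewrite /= eqxx; apply: sub_tr s2 s1.
  - by rewrite /= sz2 /t' eqxx; have := tpos d => /negbT; lia.
  - case=> [|y T'] //= sub [szT].
    move: sub; case: eqP => [-> sub|ney sub].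
      exact: hom1 (sub_tr sub s2) szT.
    by apply: hom2 => //=; rewrite szT.
exists d', H2; split.
- change (subseq H2 (x :: A')); apply: (sub_tr s2); apply: (sub_tr s1); exact: subseq_cons.
- by rewrite sz2 /t' (negbTE ne).
- exact: hom2.
Qed.

Lemma ramsey K (C : finType) m : exists N, RamseyP K (fun _ : C => m) N.
Proof.
elim: K m => [|K IH] m; first exact: ramsey0.
exact: (ramsey_step IH (leqnn _)).
Qed.


Lemma card_count (T : finType) (P : pred T) : #|[set x | P x]| = count P (enum T).
Proof. rewrite cardsE cardE /enum_mem size_filter count_filter; apply: eq_count => x /=; by rewrite andbT. Qed.

Section Emb.
Variables (V : finType) (l m : nat) (so : sord V l).
Hypothesis Hs : is_split so.

Definition rnk (v : V) : nat := #|[set u | so.2 (u, v) && (u != v)]|.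
Definition key (v : V) : nat := so.1 v * m + rnk v.

Lemma split_cmp u v : so.1 u = so.1 v -> so.2 (u, v) || so.2 (v, u).
Proof. by case: Hs => _ _ _ h e; rewrite h e eqxx. Qed.

Lemma split_col u v : so.2 (u, v) -> so.1 u = so.1 v.
Proof. by case: Hs => _ _ _ h r; apply/eqP; rewrite -h r. Qed.

Lemma rnk_lt u v : so.2 (u, v) -> u != v -> rnk u < rnk v.
Proof.
case: Hs => refl anti tr _ ruv nuv; apply: proper_card; apply/properP; split.
  apply/subsetP => w; rewrite !inE => /andP [rwu nwu]; rewrite (tr _ _ _ rwu ruv) /=.
  apply/eqP => ewv; subst w; by move/negP: nuv; apply; apply/eqP; apply: anti.
by exists u; rewrite !inE ?ruv ?nuv // eqxx andbF.
Qed.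

Hypothesis Hm : forall c, #|[set u | so.1 u == c]| <= m.

Lemma rnk_bound v : rnk v < m.
Proof.
apply: leq_trans (Hm (so.1 v)); apply: proper_card; apply/properP; split.
  apply/subsetP => w; rewrite !inE => /andP [rwv _]; apply/eqP; exact: split_col.
by exists v; rewrite !inE ?eqxx // andbF.
Qed.

Lemma key_lt u v : (key u < key v) =
  (so.1 u < so.1 v) || ((so.1 u == so.1 v) && so.2 (u, v) && (u != v)).
Proof.
have bu := rnk_bound u; have bv := rnk_bound v; rewrite /key.
rewrite -[so.1 u == so.1 v]/(nat_of_ord (so.1 u) == nat_of_ord (so.1 v)).
case: (ltngtP (so.1 u) (so.1 v)) => [lt|gt|eq].
- apply/idP; apply: (@leq_trans ((so.1 u).+1 * m)); first by rewrite mulSn; lia.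
  by apply: leq_trans (leq_addr _ _); apply: leq_mul.
- apply/negbTE; rewrite -leqNgt; apply: (@leq_trans ((so.1 v).+1 * m)).
    by rewrite mulSn; lia.
  by apply: leq_trans (leq_addr _ _); apply: leq_mul.
- have e : so.1 u = so.1 v by apply: val_inj.
  rewrite e /= ltn_add2l; apply/idP/idP.
    move=> lt; apply/andP; split.
      have := split_cmp e; case/orP => // rvu.
      case: (eqVneq u v) => [euv|nuv]; first by subst; rewrite ltnn in lt.
      have nvu : v != u by rewrite eq_sym.
      by have := rnk_lt rvu nvu; lia.
    by apply/eqP => euv; subst; rewrite ltnn in lt.
  by case/andP => r n; apply: rnk_lt.
Qed.

Lemma key_inj : injective key.
Proof.
move=> u v ek; case: (eqVneq u v) => // nuv; exfalso.
have h1 := key_lt u v; have h2 := key_lt v u; rewrite ek ltnn in h1; rewrite ek ltnn in h2.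
move: h1 h2; rewrite nuv (eq_sym v u) nuv !andbT.
case: (ltngtP (so.1 u) (so.1 v)) => // e.
have e' : so.1 u = so.1 v by apply: val_inj.
have := split_cmp e'; rewrite e' eqxx /=; case/orP => -> //.
Qed.

Lemma key_bound v : key v < l * m.
Proof.
have := rnk_bound v; have := ltn_ord (so.1 v); rewrite /key => h1 h2.
apply: (@leq_trans ((so.1 v).+1 * m)); first by rewrite mulSn; lia.
exact: leq_mul.
Qed.
End Emb.

Definition lexr j l (q : sord 'I_j l) (i : 'I_j) : nat :=
  #|[set i' | (q.1 i' < q.1 i) || ((q.1 i' == q.1 i) && q.2 (i', i) && (i' != i))]|.

Lemma lexr_lt j l (q : sord 'I_j l) i : lexr q i < j.
Proof.
rewrite -[j in _ < j]card_ord -cardsT; apply: proper_card; apply/properP; split.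
  exact: subsetT.
by exists i; rewrite !inE ?eqxx // ltnn andbF.
Qed.

Lemma sorted_sub (s1 s2 : seq nat) : sorted ltn s1 -> sorted ltn s2 ->
  {subset s1 <= s2} -> subseq s1 s2.
Proof.
elim: s2 s1 => [|y s2 IH] [|x s1] //=.
  by move=> _ _ /(_ x); rewrite inE eqxx /= => /(_ isT).
move=> p1 p2 sub.
have ay := order_path_min ltn_trans p2.
have ax := order_path_min ltn_trans p1.
case: eqP => [exy|nxy].
  subst y; apply: IH; [exact: path_sorted p1|exact: path_sorted p2|].
  move=> z zs; have := sub z; rewrite !inE zs orbT => /(_ isT) /orP [/eqP ezx|//].
  by subst z; move/allP: ax => /(_ x zs); rewrite ltnn.
apply: IH => //; first exact: path_sorted p2.
have xs2 : x \in s2.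
  by have := sub x; rewrite !inE eqxx /= => /(_ isT) /orP [/eqP //|//].
have yx : y < x by move/allP: ay => /(_ x xs2).
move=> z; rewrite inE => /orP [/eqP -> //| zs1].
have xz : x < z by move/allP: ax => /(_ z zs1).
have := sub z; rewrite !inE zs1 orbT => /(_ isT) /orP [/eqP ezy|//].
by subst z; have := ltn_trans yx xz; rewrite ltnn.
Qed.

Lemma nth_count (s : seq nat) x : sorted ltn s -> x \in s ->
  nth 0 s (count (fun y => y < x) s) = x.
Proof.
elim: s => [|y s IH] //= p; have ay := order_path_min ltn_trans p.
rewrite inE => /orP [/eqP ->|xs].
  rewrite ltnn add0n (eq_in_count (a2 := pred0)) ?count_pred0 //.
  by move=> z zs /=; move/allP: ay => /(_ z zs) yz; rewrite ltnNge ltnW.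
have -> : y < x by move/allP: ay => /(_ x xs).
by rewrite add1n /= IH //; exact: path_sorted p.
Qed.


Lemma lexr_key (V : finType) l m (so : sord V l) j (a : {ffun 'I_j -> V}) :
  is_split so -> (forall c, #|[set u | so.1 u == c]| <= m) -> injective a ->
  forall i, lexr (pullback so a) i = #|[set i' | key m so (a i') < key m so (a i)]|.
Proof.
move=> Hs Hm ainj i; apply: eq_card => i'; rewrite !inE (key_lt Hs Hm) /pullback /= !ffunE.
by rewrite (inj_eq ainj).
Qed.

Lemma embed_T (V : finType) l m (so : sord V l) K (H : seq nat) j (a : {ffun 'I_j -> V}) :
  is_split so -> (forall c, #|[set u | so.1 u == c]| <= m) ->
  sorted ltn H -> l * m + K <= size H -> j <= K -> injective a ->
  exists T, [/\ subseq T H, size T = K &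
    forall i, nth 0 T (lexr (pullback so a) i) = nth 0 H (key m so (a i))].
Proof.
move=> Hs Hm sH szH jK ainj.
pose Ix := [seq key m so (a i) | i <- enum 'I_j] ++ iota (l * m + j) (K - j).
pose T := sort leq [seq nth 0 H y | y <- Ix].
have Ixb : forall y, y \in Ix -> y < size H.
  move=> y; rewrite mem_cat mem_iota => /orP [/mapP [i _ ->]|/andP [_ h]].
    by apply: leq_trans (key_bound Hs Hm _) _; lia.
  lia.
have nthlt : forall y z, y < size H -> z < size H -> (nth 0 H y < nth 0 H z) = (y < z).
  move=> y z hy hz; apply/idP/idP; last first.
    by move=> yz; apply: (sorted_ltn_nth ltn_trans 0 sH) => //.
  move=> lt; rewrite ltnNge; apply/negP; rewrite leq_eqVlt => /orP [/eqP ezy|zy].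
    by subst z; rewrite ltnn in lt.
  have h := sorted_ltn_nth ltn_trans 0 sH z y hz hy zy; have := ltn_trans lt h; by rewrite ltnn.
have nthinj : {in Ix &, injective (nth 0 H)}.
  move=> y z hy hz e; case: (ltngtP y z) => // lt.
    by have := nthlt y z (Ixb _ hy) (Ixb _ hz); rewrite e ltnn lt.
  by have := nthlt z y (Ixb _ hz) (Ixb _ hy); rewrite e ltnn lt.
have keyinj : injective (fun i => key m so (a i)).
  by move=> i i' /(key_inj Hs Hm) /ainj.
have uIx : uniq Ix.
  rewrite cat_uniq iota_uniq map_inj_uniq ?enum_uniq // andbT /=.
  apply/hasPn => y; rewrite mem_iota => /andP [h _]; apply/negP => /mapP [i _ ey].
  by have := key_bound Hs Hm (a i); lia.
have uT : uniq T by rewrite sort_uniq map_inj_in_uniq.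
have sT : sorted ltn T by rewrite ltn_sorted_uniq_leq uT sort_sorted //; exact: leq_total.
exists T; split.
- have := sorted_sub sT sH; apply => y; rewrite mem_sort => /mapP [z zI ->]; exact/mem_nth/Ixb.
- by rewrite size_sort size_map size_cat size_map size_enum_ord size_iota; lia.
- move=> i.
  have xT : nth 0 H (key m so (a i)) \in T.
    rewrite mem_sort; apply: map_f; rewrite mem_cat; apply/orP; left; apply: map_f; exact: mem_enum.
  have kH : forall i0, key m so (a i0) < size H.
    by move=> i0; apply: Ixb; rewrite mem_cat; apply/orP; left; apply: map_f; exact: mem_enum.
  rewrite -[in RHS](nth_count sT xT); congr nth.
  rewrite (permP (permEl (perm_sort leq _))) count_map count_cat.
  rewrite [X in _ + X](eq_in_count (a2 := pred0)) ?count_pred0 ?addn0.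
    rewrite count_map (lexr_key Hs Hm ainj) card_count; apply: eq_in_count => i' _ /=.
    by rewrite nthlt.
  move=> y yI /=; have yH : y < size H by apply: Ixb; rewrite mem_cat yI orbT.
  rewrite nthlt //; move: yI; rewrite mem_iota => /andP [h _]; have := key_bound Hs Hm (a i); lia.
Qed.

Lemma sorted_nth_inj (H : seq nat) y z : sorted ltn H -> y < size H -> z < size H ->
  nth 0 H y = nth 0 H z -> y = z.
Proof.
move=> sH hy hz e; case: (ltngtP y z) => // lt.
  by have := sorted_ltn_nth ltn_trans 0 sH y z hy hz lt; rewrite e ltnn.
by have := sorted_ltn_nth ltn_trans 0 sH z y hz hy lt; rewrite e ltnn.
Qed.


Definition is_splitb (V : finType) l (q : sord V l) : bool :=
 [&& [forall v, q.2 (v, v)],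
     [forall v, forall w, (q.2 (v, w) && q.2 (w, v)) ==> (v == w)],
     [forall u, forall v, forall w, (q.2 (u, v) && q.2 (v, w)) ==> q.2 (u, w)] &
     [forall v, forall w, (q.2 (v, w) || q.2 (w, v)) == (q.1 v == q.1 w)]].

Lemma is_splitP (V : finType) l (q : sord V l) : reflect (is_split q) (is_splitb q).
Proof.
apply: (iffP and4P) => [[/forallP h1 /forallP h2 /forallP h3 /forallP h4]|[h1 h2 h3 h4]].
  split => //.
  - by move=> v w r1 r2; have /forallP/(_ w)/implyP := h2 v; rewrite r1 r2 => /(_ isT)/eqP.
  - move=> u v w r1 r2; have /forallP/(_ v)/forallP/(_ w)/implyP := h3 u.
    by rewrite r1 r2; apply.
  - by move=> v w; have /forallP/(_ w)/eqP := h4 v.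
split; apply/forallP => v.
- exact: h1.
- by apply/forallP => w; apply/implyP => /andP [r1 r2]; apply/eqP; apply: h2.
- apply/forallP => w; apply/forallP => x; apply/implyP => /andP [r1 r2]; exact: h3 r1 r2.
- by apply/forallP => w; apply/eqP; apply: h4.
Qed.

Definition comp_so (V W : finType) l (so : sord W l) (g : V -> W) : sord V l :=
  ([ffun v => so.1 (g v)], [ffun p => so.2 (g p.1, g p.2)]).

Lemma comp_split (V W : finType) l (so : sord W l) (g : V -> W) :
  injective g -> is_split so -> is_split (comp_so so g).
Proof.
move=> ginj [h1 h2 h3 h4]; split.
- by move=> v; rewrite /comp_so /= !ffunE.
- by move=> v w; rewrite /comp_so /= !ffunE => r1 r2; apply: ginj; apply: h2.
- by move=> u v w; rewrite /comp_so /= !ffunE; apply: h3.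
- by move=> v w; rewrite /comp_so /= !ffunE h4.
Qed.

Lemma pullback_split (V : finType) l (so : sord V l) j (a : {ffun 'I_j -> V}) :
  injective a -> is_split so -> is_split (pullback so a).
Proof. exact: (@comp_split _ _ _ so (fun i => a i)). Qed.

Lemma pullback_comp (mm nn : nat) l (so : sord 'I_nn l) (g : 'I_mm -> 'I_nn) j (a : {ffun 'I_j -> 'I_mm}) :
  pullback (comp_so so g) a = pullback so (tcomp g a).
Proof. by rewrite /pullback /comp_so /tcomp /=; congr pair; apply/ffunP => x; rewrite !ffunE. Qed.

Lemma tcomp_inj (m n j : nat) (f : 'I_m -> 'I_n) (a : {ffun 'I_j -> 'I_m}) :
  injective f -> injective a -> injective (tcomp f a).
Proof. by move=> fi ai x y; rewrite /tcomp !ffunE => /fi /ai. Qed.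

Lemma tcomp_inj_inv (m n j : nat) (f : 'I_m -> 'I_n) (a : {ffun 'I_j -> 'I_m}) :
  injective (tcomp f a) -> injective a.
Proof. by move=> h x y e; apply: h; rewrite /tcomp !ffunE e. Qed.

Lemma tcomp_comp (m n p j : nat) (f : 'I_m -> 'I_n) (g : 'I_n -> 'I_p) (a : {ffun 'I_j -> 'I_m}) :
  tcomp g (tcomp f a) = tcomp (fun x => g (f x)) a.
Proof. by apply/ffunP => x; rewrite !ffunE. Qed.

Definition CB (L : finType) (k : L -> nat) l K :=
  {dffun forall P : L, {set {ffun 'I_(k P) -> 'I_l * 'I_K}}}.

Definition mkCB (L : finType) (k : L -> nat) l K (f : forall P : L, {set {ffun 'I_(k P) -> 'I_l * 'I_K}}) : CB k l K :=
  [ffun P => f P].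

Lemma mkCBE (L : finType) (k : L -> nat) l K f P : @mkCB L k l K f P = f P.
Proof. by rewrite /mkCB ffunE. Qed.


Section Main.
Variables (L : finType) (k : L -> nat) (fam : GLstruct k -> Prop).

Lemma notB_ex l : 0 < l -> ~ chiB fam l -> exists Q : pattern k l, is_pattern Q /\ ~ chiE fam l Q.
Proof.
move=> lpos nB; apply: NNPP => nex; apply: nB; split => // Q HQ.
by apply: NNPP => nE; apply: nex; exists Q.
Qed.

Definition soN n l (lpos : 0 < l) : sord 'I_n l :=
  ([ffun x : 'I_n => Ordinal (ltn_pmod x lpos)],
   [ffun p : 'I_n * 'I_n => (p.1 %% l == p.2 %% l) && (p.1 <= p.2)]).

Lemma soN_split n l lpos : is_split (@soN n l lpos).
Proof.
split; rewrite /soN /=.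
- by move=> v; rewrite ffunE /= eqxx leqnn.
- move=> v w; rewrite !ffunE /= => /andP [_ h1] /andP [_ h2]; apply: val_inj; apply/eqP.
  by rewrite eqn_leq h1 h2.
- move=> u v w; rewrite !ffunE /= => /andP [/eqP e1 h1] /andP [/eqP e2 h2].
  by rewrite e1 e2 eqxx (leq_trans h1 h2).
- move=> v w; rewrite !ffunE /= -val_eqE /= eq_sym.
  case: eqP => //= _; exact: leq_total.
Qed.

Lemma partA l : 0 < l -> ~ chiB fam l -> chiA fam l.
Proof.
move=> lpos nB; have [Q [HQ nQ]] := notB_ex lpos nB.
split => // n.
pose N := @GLS L k n (Tnl n l) (fun P => [set a : {ffun 'I_(k P) -> 'I_n} | injectiveb (fun i => a i) && (pullback (soN n lpos) a \in Q P)]).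
exists N; split => //; last by exists id; split.
split.
  split.
  - by move=> x y; rewrite /= /Tnl eq_sym.
  - by move=> x; rewrite /= /Tnl eqxx.
  - by move=> P a; rewrite /= inE => /andP [/injectiveP].
move=> [G [[GM [F [famF [e [Eed Erel]]]]] [f [finj fed frel]]]].
apply: nQ; exists F; split => //.
pose g := fun v => f (cast_ord e v).
have ginj : injective g by move=> x y /finj /cast_ord_inj.
exists (comp_so (soN n lpos) g); split.
- exact: comp_split ginj (soN_split _ _).
- move=> P a; rewrite /J /= Erel frel /= inE tcomp_comp -/g -pullback_comp.
  split.
    by move=> /andP [/injectiveP /tcomp_inj_inv ai ->].
  move=> [ai ->]; rewrite andbT; apply/injectiveP; exact: tcomp_inj.
- move=> x y /Eed; rewrite fed /= /Tnl /comp_so /= !ffunE.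
  by [].
Qed.

Definition wid V l (q : sord V l) : sord V l.+1 :=
  ([ffun v => widen_ord (leqnSn l) (q.1 v)], q.2).

Lemma wid_split V l (q : sord V l) : is_split (wid q) <-> is_split q.
Proof.
rewrite /wid; split => -[h1 h2 h3 h4]; split => // v w; move: (h4 v w) => /=;
  by rewrite ?ffunE -!val_eqE.
Qed.

Lemma chiB_mono l : chiB fam l -> chiB fam l.+1.
Proof.
move=> [lpos HB]; split => // Q HQ.
pose Q' : pattern k l := fun P => [set q | wid q \in Q P].
have HQ' : is_pattern Q' by move=> P q; rewrite inE => /HQ /wid_split.
have [F [famF [so [Hs Hu He]]]] := HB Q' HQ'.
exists F; split => //; exists (wid so); split.
- exact/wid_split.
- move=> P a; rewrite Hu inE.
  have -> : wid (pullback so a) = pullback (wid so) a.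
    by rewrite /wid /pullback /=; congr pair; apply/ffunP => x; rewrite !ffunE.
  by [].
- by move=> x y /He; rewrite /wid /= !ffunE -!val_eqE.
Qed.

Definition lexso V l (q : sord V l) : sord V 1 :=
  ([ffun _ => ord0], [ffun p => (q.1 p.1 < q.1 p.2) || ((q.1 p.1 == q.1 p.2 :> nat) && q.2 p)]).

Lemma lexso_split V l (q : sord V l) : is_split q -> is_split (lexso q).
Proof.
move=> [h1 h2 h3 h4]; split; rewrite /lexso /=.
- by move=> v; rewrite ffunE ltnn eqxx h1.
- move=> v w; rewrite !ffunE /=.
  case: (ltngtP (q.1 v) (q.1 w)) => //= e; exact: h2.
- move=> u v w; rewrite !ffunE /=.
  case: (ltngtP (q.1 u) (q.1 v)) => /= e1; case: (ltngtP (q.1 v) (q.1 w)) => /= e2;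
    rewrite ?eqxx ?andbT ?andbF //=; try lia.
  by rewrite e1 e2 ltnn eqxx /=; apply: h3.
- move=> v w; rewrite !ffunE /= eqxx.
  case: (ltngtP (q.1 v) (q.1 w)) => //= e.
  by rewrite h4; apply/eqP; apply: val_inj.
Qed.

Lemma partD1 l : chiB fam l -> forall Q1 : pattern k 1, is_pattern Q1 -> U 1 (Jfam fam) Q1.
Proof.
move=> [lpos HB] Q1 HQ1.
pose Q : pattern k l := fun P => [set q | is_splitb q && (lexso q \in Q1 P)].
have HQ : is_pattern Q by move=> P q; rewrite inE => /andP [/is_splitP].
have [F [famF [so [Hs Hu He]]]] := HB Q HQ.
exists (J F); split; first by exists F.
exists (lexso so); split; first exact: lexso_split.
move=> P a; rewrite Hu inE.
have -> : lexso (pullback so a) = pullback (lexso so) a.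
  by rewrite /lexso /pullback /=; congr pair; apply/ffunP => x; rewrite !ffunE.
split; first by move=> [ai /andP [_ ->]].
by move=> [ai h]; split => //; rewrite h andbT; apply/is_splitP/pullback_split.
Qed.

End Main.


Section Main2.
Variables (L : finType) (k : L -> nat) (fam : GLstruct k -> Prop).
Hypothesis Hfam : forall F, fam F -> is_model F.

Definition Kmax := (\max_(P : L) k P).+1.
Lemma kK P : k P <= Kmax.
Proof. by apply: leq_trans (leqnSn _); apply: leq_bigmax. Qed.

Definition CD := {dffun forall P : L, {set {ffun 'I_(k P) -> 'I_Kmax}}}.

Definition Q1of (c0 : CD) : pattern k 1 := fun P =>
  [set q | is_splitb q && ([ffun i => inord (lexr q i)] \in c0 P)].

Lemma partD2 : (forall Q1 : pattern k 1, is_pattern Q1 -> U 1 (Jfam fam) Q1) ->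
  exists l, chiB fam l.
Proof.
move=> HU.
have [M HM] : exists M, forall c0 : CD, exists F, [/\ fam F, nv F <= M &
    exists so1 : sord 'I_(nv F) 1, is_split so1 /\ uniform (J F) (Q1of c0) so1].
  apply: fin_bound.
    by move=> c N N' le [F [f1 f2 f3]]; exists F; split => //; exact: leq_trans f2 le.
  move=> c0; have HQ : is_pattern (Q1of c0) by move=> P q; rewrite inE => /andP [/is_splitP].
  have [K0 [[F [famF ->]] [so1 [s1 u1]]]] := HU _ HQ.
  by exists (nv F), F; split => //; exists so1.
have [N0 HN0] := ramsey Kmax CD (1 * M + Kmax).
exists N0.+1; split => // Q HQ.
pose col (T : seq nat) : CD := [ffun P => [set β : {ffun 'I_(k P) -> 'I_Kmax} |
   (([ffun i => inord (nth 0 T (β i))], [ffun p => p.1 == p.2]) : sord 'I_(k P) N0.+1) \in Q P]].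
have hsz : N0 <= size (iota 0 N0.+1) by rewrite size_iota.
have [c0 [H [subH szH homH]]] := HN0 (iota 0 N0.+1) col hsz.
have [F [famF FM [so1 [s1 u1]]]] := HM c0.
have Hm : forall c, #|[set u | so1.1 u == c]| <= M.
  by move=> c; apply: leq_trans (max_card _) _; rewrite card_ord.
have sH : sorted ltn H := subseq_sorted ltn_trans subH (iota_ltn_sorted 0 _).
have Hl : forall x, x \in H -> x < N0.+1.
  by move=> x /(mem_subseq subH); rewrite mem_iota.
pose pos u := nth 0 H (key M so1 u).
have keyH : forall u, key M so1 u < size H.
  by move=> u; rewrite szH; apply: leq_trans (key_bound s1 Hm u) _; lia.
have posH : forall u, pos u \in H by move=> u; exact: mem_nth.
have posinj : injective pos.
  move=> u v e; apply: (key_inj s1 Hm); exact: sorted_nth_inj sH (keyH u) (keyH v) e.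
pose soF : sord 'I_(nv F) N0.+1 := ([ffun u => inord (pos u)], [ffun p => p.1 == p.2]).
have soFinj : forall u v, (soF.1 u == soF.1 v) = (u == v).
  move=> u v; rewrite /soF /= !ffunE -val_eqE /= !inordK ?Hl //.
  by rewrite (inj_eq posinj).
exists F; split => //; exists soF; split.
- split; rewrite /soF /=.
  + by move=> v; rewrite ffunE eqxx.
  + by move=> v w; rewrite ffunE /= => /eqP.
  + by move=> u v w; rewrite !ffunE /= => /eqP -> .
  + move=> v w; rewrite !ffunE /=; have := soFinj v w; rewrite /soF /= !ffunE => ->.
    by rewrite eq_sym orbb.
- move=> P a; rewrite /= (u1 P a).
  have core : injective a -> ([ffun i => inord (lexr (pullback so1 a) i)] \in c0 P) =
      (pullback soF a \in Q P).
    move=> ai.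
    have [T [subT szT hT]] := embed_T s1 Hm sH (eq_leq (esym szH)) (kK P) ai.
    rewrite -(homH T subT szT) ffunE inE; congr (_ \in Q P).
    rewrite /pullback /soF /=; congr pair; apply/ffunP => i; rewrite !ffunE //=.
      rewrite inordK ?hT //; apply: leq_trans (lexr_lt _ _) (kK P).
    by rewrite (inj_eq ai).
  split => [[ai h]|[ai h]]; split => //; move: h; rewrite inE.
    by case/andP => _; rewrite core.
  by rewrite -core // => ->; rewrite andbT; apply/is_splitP/pullback_split.
- move=> x y ed; rewrite soFinj; apply/eqP => exy; subst y.
  by have [_ irr _] := Hfam famF; rewrite irr in ed.
Qed.

End Main2.


Section Main3.
Variables (L : finType) (k : L -> nat) (fam : GLstruct k -> Prop).
Hypothesis Hfam : forall F, fam F -> is_model F.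

Definition QBof l (c0 : CB k l (Kmax k)) : pattern k l := fun P =>
  [set q | is_splitb q && ([ffun i => (q.1 i, inord (lexr q i))] \in c0 P)].

Lemma partB l : chiB fam l -> ~ chiA fam l.
Proof.
move=> [lpos HB] [_ HA].
have [M HM] : exists M, forall c0 : CB k l (Kmax k), exists F, [/\ fam F, nv F <= M &
    exists so : sord 'I_(nv F) l, E_proper F (QBof c0) so].
  apply: fin_bound.
    by move=> c N N' le [F [f1 f2 f3]]; exists F; split => //; exact: leq_trans f2 le.
  move=> c0; have HQ : is_pattern (QBof c0) by move=> P q; rewrite inE => /andP [/is_splitP].
  have [F [famF [so Hso]]] := HB _ HQ.
  by exists (nv F), F; split => //; exists so.
have [N0 HN0] := ramsey (Kmax k) (CB k l (Kmax k)) (l * M + Kmax k).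
have [N [FN eN [h [hinj hed]]]] := HA (l * N0).+1.
pose vert (c : 'I_l) (x : nat) : 'I_(nv N) := h (inord (x * l + c)).
pose col (T : seq nat) : CB k l (Kmax k) := [ffun P => [set β : {ffun 'I_(k P) -> 'I_l * 'I_(Kmax k)} |
   [ffun i => vert (β i).1 (nth 0 T (β i).2)] \in rels N P]].
have hsz : N0 <= size (iota 0 N0) by rewrite size_iota.
have [c0 [H [subH szH homH]]] := HN0 (iota 0 N0) col hsz.
have [F [famF FM [so [Hs Hu He]]]] := HM c0.
have Hm : forall c, #|[set u | so.1 u == c]| <= M.
  by move=> c; apply: leq_trans (max_card _) _; rewrite card_ord.
have sH : sorted ltn H := subseq_sorted ltn_trans subH (iota_ltn_sorted 0 _).
have Hl : forall x, x \in H -> x < N0.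
  by move=> x /(mem_subseq subH); rewrite mem_iota.
pose pos u := nth 0 H (key M so u).
have keyH : forall u, key M so u < size H.
  by move=> u; rewrite szH; apply: leq_trans (key_bound Hs Hm u) _; lia.
have posN : forall u, pos u < N0 by move=> u; exact/Hl/mem_nth.
have posinj : injective pos.
  move=> u v e; apply: (key_inj Hs Hm); exact: sorted_nth_inj sH (keyH u) (keyH v) e.
pose idx u := pos u * l + so.1 u.
have idxN : forall u, idx u < (l * N0).+1.
  move=> u; have := posN u; have := ltn_ord (so.1 u); rewrite /idx => h1 h2.
  apply: (@leq_trans (l * N0)); last exact: leqnSn.
  apply: (@leq_trans ((pos u).+1 * l)); first by rewrite mulSn; lia.
  by rewrite mulnC; apply: leq_mul.
have idxmod : forall u, idx u %% l = so.1 u.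
  by move=> u; rewrite /idx modnMDl modn_small.
have idxinj : injective idx.
  move=> u v e.
  have ec : so.1 u = so.1 v.
    by have hh := idxmod u; rewrite e idxmod in hh; apply: val_inj; exact: (esym hh).
  apply: posinj; apply/eqP; rewrite -(eqn_pmul2r lpos); apply/eqP.
  by move: e; rewrite /idx ec => /addIn.
pose emb u := h (inord (idx u)).
have embinj : injective emb.
  move=> u v /hinj /(congr1 (@nat_of_ord _)); rewrite !inordK ?idxN //; exact: idxinj.
have [[Nsym Nirr Ncan] Nforb] := FN.
apply: Nforb.
exists (GLS (nv F) (fun x y => edge N (emb x) (emb y)) (rels F)); split.
  split.
    have [_ _ Fcan] := Hfam famF.
    split => //; [by move=> x y /=; rewrite Nsym | by move=> x /=; rewrite Nirr].
  exists F; split; first exact: famF.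
  refine (ex_intro _ (erefl (nv F)) _); split.
    move=> x y ed; rewrite /= !cast_ord_id; apply: hed.
    by rewrite /Tnl !inordK ?idxN // !idxmod; apply: He.
  move=> P a; suff -> : tcomp (cast_ord (erefl (nv F))) a = a by [].
  by apply/ffunP => i; rewrite ffunE cast_ord_id.
exists emb; split => // P a /=.
have core : injective a ->
   ([ffun i => ((pullback so a).1 i, inord (lexr (pullback so a) i))] \in c0 P) =
   (tcomp emb a \in rels N P).
  move=> ai.
  have [T [subT szT hT]] := embed_T Hs Hm sH (eq_leq (esym szH)) (kK k P) ai.
  rewrite -(homH T subT szT) ffunE inE; congr (_ \in rels N P).
  apply/ffunP => i; rewrite !ffunE /= inordK ?hT //.
  exact: leq_trans (lexr_lt _ _) (kK k P).
apply/idP/idP.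
  move=> ha; have [_ _ Fcan] := Hfam famF; have ai := Fcan _ _ ha.
  by have [_ ] := (Hu P a).1 ha; rewrite inE => /andP [_]; rewrite core.
move=> hN; have ai := tcomp_inj_inv (Ncan _ _ hN).
apply/(Hu P a).2; split => //; rewrite inE core // hN andbT.
by apply/is_splitP/pullback_split.
Qed.

End Main3.


Lemma ex_min (P : nat -> Prop) l : P l -> exists m, P m /\ forall l', P l' -> m <= l'.
Proof.
have: forall n l, l <= n -> P l -> exists m, P m /\ forall l', P l' -> m <= l'.
  elim=> [|n IH] l0 hl hp.
    exists l0; split => // l' _; move: hl; rewrite leqn0 => /eqP ->; exact: leq0n.
  case: (classic (exists l', l' < l0 /\ P l')) => [[l' [lt hp']]|nex].
    by apply: (IH l') => //; lia.
  exists l0; split => // l' hp'; rewrite leqNgt; apply/negP => lt; apply: nex; by exists l'.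
by move=> h; apply: (h l l).
Qed.

Lemma chiB_monoN (L : finType) (k : L -> nat) (fam : GLstruct k -> Prop) l l' :
  chiB fam l -> l <= l' -> chiB fam l'.
Proof.
move=> hB /subnKC <-; elim: (l' - l) => [|d IH]; first by rewrite addn0.
by rewrite addnS; apply: chiB_mono.
Qed.

Theorem theorem3p6 (L : finType) (k : L -> nat) (fam : GLstruct k -> Prop)
  (Hfam : forall F, fam F -> is_model F) :
  (forall x : option nat, chi_val fam x <-> inf_val (chiB fam) x) /\
  ((exists m, chi_val fam (Some m)) <->
     (forall Q : pattern k 1, is_pattern Q -> U 1 (Jfam fam) Q)).
Proof.
have pB := partB Hfam.
have first : forall x : option nat, chi_val fam x <-> inf_val (chiB fam) x.
  case=> [m|]; split.
  - move=> [s [-> ub hs]]; split.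
      apply: NNPP => nB; have := ub _ (partA (ltn0Sn s) nB); by rewrite ltnn.
    move=> l hl; rewrite leqNgt; apply/negP => lt.
    have lpos := hl.1.
    case: hs => [s0|hA].
      by subst s; lia.
    by apply: (pB s) hA; apply: chiB_monoN hl _; lia.
  - move=> [hB hmin]; have mpos := hB.1; case: m mpos hB hmin => [//|s] _ hB hmin.
    exists s; split => //.
      move=> l hA; rewrite leqNgt; apply/negP => lt.
      by apply: (pB l) hA; apply: chiB_monoN hB _; lia.
    case: s hB hmin => [|s] hB hmin; first by left.
    right; apply: partA => // nB.
    by have := hmin _ nB; rewrite ltnn.
  - move=> H l hl; have [l' [hA lt]] := H l.
    by apply: (pB l') hA; apply: chiB_monoN hl _; lia.
  - move=> hn s; exists s.+1; split => //; apply: partA => //; exact: hn.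
split => //; split.
  move=> [m /first [hB _]]; exact: partD1 hB.
move=> hU; have [l hB] := partD2 Hfam hU.
have [m [hm hmin]] := ex_min hB.
by exists m; apply/first.
Qed.
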